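(* If a topological space $X$ has an $\omega$-deep $\pi$-base, then $X\times\mathbb{Q}$ is $NWD$-separable.
   Context: A $\pi$-base $\mathcal{U}$ is $\omega$-deep if for every decreasing sequence $\{U_n\}_{n<\omega}\subseteq\mathcal{U}$ the set $\bigcap_{n<\omega}U_n$ has nonempty interior. $\mathbb{Q}$ carries its usual topology. A space $Y$ is $NWD$-separable if for every sequence $\{D_n:n<\omega\}$ of dense subsets of $Y$ there are nowhere dense sets $E_n\subseteq D_n$ such that $\bigcup_{n<\omega}E_n$ is dense in $Y$. *)

(* Defs.v *)
From mathcomp Require Import all_boot all_order all_algebra.
From mathcomp Require Import all_classical all_reals all_analysis.

Set Implicit Arguments.
Unset Strict Implicit.
Unset Printing Implicit Defensive.

Local Open Scope classical_set_scope.

Definition pi_base (X : topologicalType) (U : set (set X)) : Prop :=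
  (forall V, U V -> open V /\ V !=set0) /\
  (forall W, open W -> W !=set0 -> exists2 V, U V & V `<=` W).

Definition omega_deep_pi_base (X : topologicalType) (U : set (set X)) : Prop :=
  pi_base U /\
  forall Un : nat -> set X,
    (forall n, U (Un n)) -> (forall n, Un n.+1 `<=` Un n) ->
    (\bigcap_n Un n)^° !=set0.

Definition nowhere_dense (Y : topologicalType) (E : set Y) : Prop :=
  (closure E)^° = set0.

Definition NWD_separable (Y : topologicalType) : Prop :=
  forall D : nat -> set Y, (forall n, dense (D n)) ->
  exists E : nat -> set Y,
    (forall n, E n `<=` D n /\ nowhere_dense (E n)) /\
    dense (\bigcup_n E n).

Definition Qtop : topologicalType := order_topology rat.

(* Main.v *)
Require Import Defs.
From mathcomp Require Import all_boot all_order all_algebra.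
From mathcomp Require Import all_classical all_reals all_analysis.
From mathcomp Require Import lra.
Import Order.TTheory GRing.Theory Num.Theory.
Local Open Scope classical_set_scope.
Local Open Scope ring_scope.

Lemma Qnbhs (q : Qtop) (L : set Qtop) : nbhs q L ->
  exists a b : rat, [/\ a < (q : rat), (q : rat) < b &
    forall r : rat, a < r -> r < b -> L r].
Proof.
rewrite itv_nbhsE => -[i [oi qi] iL].
case: i oi qi iL => [[[]l|[]] [[]r|[]]] //= _; rewrite in_itv /=.
- move=> /andP[lq qr] sub; exists l, r; split => // y ly yr.
  by apply: sub; rewrite /= in_itv /= ly yr.
- rewrite andbT => lq sub; exists l, ((q:rat) + 1); split => //.
    by lra.
  by move=> y ly _; apply: sub; rewrite /= in_itv /= ly.
- move=> qr sub; exists ((q:rat) - 1), r; split => //.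
    by lra.
  by move=> y _ yr; apply: sub; rewrite /= in_itv /= yr.
- move=> _ sub; exists ((q:rat) - 1), ((q:rat) + 1); split; try lra.
  by move=> y _ _; apply: sub.
Qed.

Lemma Qitv_nbhs (a b q : rat) : a < q -> q < b ->
  @nbhs _ Qtop (q : Qtop) [set r : Qtop | a < (r : rat) < b].
Proof.
move=> aq qb.
have -> : [set r : Qtop | a < (r : rat) < b] = (`]a, b[%classic : set Qtop).
  by apply/seteqP; split => r /=; rewrite in_itv.
apply: open_nbhs_nbhs; split; first exact: itv_open.
by rewrite /= in_itv /= aq qb.
Qed.
Lemma prod_nbhsE' (T V : topologicalType) (p : T * V) (A : set (T * V)) :
  nbhs p A -> exists P Q, [/\ nbhs p.1 P, nbhs p.2 Q &
     forall y r, P y -> Q r -> A (y, r)].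
Proof.
move=> [[P Q] /= [hP hQ] sub]; exists P, Q; split => // y r Py Qr.
by apply: sub.
Qed.

Lemma prod_nbhsI' (T V : topologicalType) (p : T * V) (P : set T) (Q : set V) :
  nbhs p.1 P -> nbhs p.2 Q -> nbhs p [set z | P z.1 /\ Q z.2].
Proof.
move=> hP hQ; exists (P, Q) => //= -[y r] [] /= Py Qr; split.
Qed.

Section Construction.
Variables (X : topologicalType) (U : set (set X)).
Hypothesis hU : omega_deep_pi_base U.
Variables (D : set (X * Qtop)) (a b : rat).
Hypothesis hD : dense D.

Definition Jab (s : Qtop) : Prop := a < (s : rat) < b.
Definition fib (s : Qtop) : set X := [set x | D (x, s)].
Definition Oo (s : Qtop) : set X := [set x | Jab s /\ (closure (fib s))° x].
Definition Pre (s : Qtop) : set X :=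
  \bigcup_(t in [set t : Qtop | (pickle (t : rat) < pickle (s : rat))%N]) Oo t.
Definition Oo' (s : Qtop) : set X := [set x | Oo s x /\ ~ closure (Pre s) x].
Definition Eset : set (X * Qtop) := [set p | Oo' p.2 p.1 /\ D p].

Lemma Oo_open s : open (Oo s).
Proof.
rewrite openE => x [Js hx].
have : nbhs x (closure (fib s))° by exact: nbhs_interior.
by apply: filterS => y hy; split.
Qed.

Lemma Oo'_open s : open (Oo' s).
Proof.
rewrite openE => x [Ox nCx].
have h1 : nbhs x (Oo s) by apply: open_nbhs_nbhs; split => //; exact: Oo_open.
have h2 : nbhs x (~` closure (Pre s)).
  apply: open_nbhs_nbhs; split => //; apply: closed_openC; exact: closed_closure.
by apply: filterS (filterI h1 h2) => y [].
Qed.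

Lemma Oo'_disj s t x : Oo' s x -> Oo' t x -> s = t.
Proof.
move=> [Osx nCs] [Otx nCt].
have [lt|lt|eq] := ltngtP (pickle (s : rat)) (pickle (t : rat)).
- by exfalso; apply: nCt; apply: subset_closure; exists s.
- by exfalso; apply: nCs; apply: subset_closure; exists t.
- by have := pcan_inj (@pickleK rat) eq.
Qed.


Lemma Oo_dense (q0 : Qtop) : Jab q0 ->
  forall V : set X, open V -> V !=set0 -> exists s x, V x /\ Oo s x.
Proof.
move=> Jq0 V oV [v0 Vv0].
apply: contrapT => nH.
have H : forall s x, V x -> Oo s x -> False.
  by move=> s x Vx Ox; apply: nH; exists s, x.
case: hU => [[hpi1 hpi2] hdeep].
pose en (i : nat) : Qtop := odflt (0 : rat) (unpickle i).
have step : forall iZ : nat * set X, exists Z' : set X,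
  (U iZ.2 /\ iZ.2 `<=` V) ->
  [/\ U Z', Z' `<=` iZ.2 & (Jab (en iZ.1) -> Z' `&` fib (en iZ.1) = set0)].
  move=> [i Z] /=.
  have [[UZ ZV]|nh] := pselect (U Z /\ Z `<=` V); last by exists Z.
  have [Js|nJs] := pselect (Jab (en i)); last by exists Z => _; split.
  set s := en i.
  have [oZ [z Zz]] := hpi1 _ UZ.
  have oG : open (Z `&` ~` closure (fib s)).
    by apply: openI => //; apply: closed_openC; exact: closed_closure.
  have neG : (Z `&` ~` closure (fib s)) !=set0.
    apply: contrapT => hG.
    apply: (H s z (ZV z Zz)); split => //.
    have nZ : nbhs z Z by apply: open_nbhs_nbhs; split.
    have sub : Z `<=` closure (fib s).
      by move=> y Zy; apply: contrapT => ncy; apply: hG; exists y.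
    exact: (filterS sub nZ).
  have [Z' UZ' Z'G] := hpi2 _ oG neG.
  exists Z' => _; split => //.
  - by move=> y /Z'G [].
  - move=> _; apply/seteqP; split => // y [/Z'G [_ ncy] fy].
    by apply: ncy; exact: subset_closure.
have [f hf] := choice step.
have [Z0 UZ0 Z0V] := hpi2 _ oV (ex_intro _ v0 Vv0).
pose Zs := fix Zs n := if n is n'.+1 then f (n', Zs n') else Z0.
have inv : forall n, U (Zs n) /\ Zs n `<=` V.
  elim=> [|n [UZn ZnV]] //=.
  have [h1 h2 _] := hf (n, Zs n) (conj UZn ZnV).
  by split => // y /h2 /ZnV.
have dec : forall n, Zs n.+1 `<=` Zs n.
  by move=> n; have [h1 h2] := inv n; case: (hf (n, Zs n) (conj h1 h2)).
have avoid : forall n, Jab (en n) -> Zs n.+1 `&` fib (en n) = set0.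
  by move=> n; have [h1 h2] := inv n; case: (hf (n, Zs n) (conj h1 h2)).
have [w hw] := hdeep Zs (fun n => (inv n).1) dec.
set W := (\bigcap_n Zs n)° in hw.
have oW : open W := open_interior _.
have oWJ : open [set p : X * Qtop | W p.1 /\ Jab p.2].
  rewrite openE => p [Wp Jp]; apply: prod_nbhsI'.
    by apply: open_nbhs_nbhs; split.
  case/andP: Jp => h1 h2.
  have hq := @Qitv_nbhs a b p.2 h1 h2.
  exact: hq.
have [p [[Wp Jp] Dp]] := hD _ (ex_intro _ (w, q0) (conj hw Jq0)) oWJ.
have ei : en (pickle (p.2 : rat)) = p.2 by rewrite /en pickleK.
have := avoid (pickle (p.2 : rat)); rewrite ei => /(_ Jp) /seteqP [+ _].
move=> /(_ p.1); apply; split.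
  by have := interior_subset Wp; apply.
by case: p Dp {Wp Jp ei}.
Qed.

Lemma Oo'_dense V : open V -> forall s x, V x -> Oo s x ->
  exists s' x', V x' /\ Oo' s' x'.
Proof.
move=> oV.
suff h : forall n s x, pickle (s : rat) = n -> V x -> Oo s x ->
    exists s' x', V x' /\ Oo' s' x'.
  by move=> s x; apply: h.
elim/ltn_ind => n IH s x ps Vx Osx.
have [[t [y [lt [Vy Oty]]]]|nex] := pselect (exists t y,
    (pickle (t : rat) < pickle (s : rat))%N /\ V y /\ Oo t y).
  by apply: (IH _ _ t y erefl Vy Oty); rewrite -ps.
exists s, x; split => //; split => // cx.
have nB : nbhs x (V `&` Oo s).
  by apply: open_nbhs_nbhs; split; [exact: openI (Oo_open s) | split].
have [y [[t lt Oty] [Vy Osy]]] := cx _ nB.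
by apply: nex; exists t, y.
Qed.

Lemma Eset_proj q0 : Jab q0 -> forall V, open V -> V !=set0 ->
  exists x s, V x /\ Eset (x, s).
Proof.
move=> Jq0 V oV neV.
have [s [x [Vx Ox]]] := @Oo_dense q0 Jq0 V oV neV.
have [s' [x' [Vx' O'x']]] := @Oo'_dense V oV _ _ Vx Ox.
have nG : nbhs x' (V `&` Oo' s').
  by apply: open_nbhs_nbhs; split; [exact: openI (Oo'_open s') | split].
have cl : closure (fib s') x'.
  by case: O'x' => [[_ hi] _]; exact: interior_subset hi.
have [y [fy [Vy Hy]]] := cl _ nG.
by exists y, s'; split.
Qed.

Lemma Eset_sub : Eset `<=` D.
Proof. by move=> p []. Qed.

Lemma Eset_J p : Eset p -> Jab p.2.
Proof. by move=> [[[]]]. Qed.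

Lemma Eset_nwd : nowhere_dense Eset.
Proof.
rewrite /nowhere_dense; apply/seteqP; split => // -[x0 q0] hp.
have [P [Q [hP hQ sub]]] := @prod_nbhsE' X Qtop (x0, q0) (closure Eset) hp.
have nPQ : nbhs (x0, q0) [set z | P° z.1 /\ Q° z.2].
  by apply: prod_nbhsI'; apply: open_nbhs_nbhs; split;
    [exact: open_interior | exact: hP | exact: open_interior | exact: hQ].
have cp : closure Eset (x0, q0).
  by apply: sub; [exact: nbhs_singleton hP | exact: nbhs_singleton hQ].
have [[x1 s] [[Hx1 De] [Px1 Qs]]] := cp _ nPQ.
have [a' [b' [h1 h2 hL]]] := @Qnbhs s Q Qs.
pose q1 : rat := ((s : rat) + b') / 2.
have sq1 : (s : rat) < q1 by rewrite /q1; lra.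
have q1b : q1 < b' by rewrite /q1; lra.
have cq : closure Eset (x1, (q1 : Qtop)).
  by apply: sub; [exact: interior_subset Px1 | apply: hL; lra].
have nG : nbhs (x1, (q1 : Qtop))
    [set z | (P° `&` Oo' s) z.1 /\ [set r : Qtop | (s : rat) < (r : rat) < b'] z.2].
  apply: prod_nbhsI'.
    apply: open_nbhs_nbhs; split; first exact: openI (open_interior _) (Oo'_open s).
    by split.
  exact: (@Qitv_nbhs s b' q1 sq1 q1b).
have [[x2 t] [[Hx2 _] [[_ Hsx2] /andP[st _]]]] := cq _ nG.
have ets := @Oo'_disj s t x2 Hsx2 Hx2.
by move: st; rewrite /= ets ltxx.
Qed.

End Construction.

Theorem lemma4p2 (X : topologicalType) :
  (exists U : set (set X), omega_deep_pi_base U) ->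
  NWD_separable (X * Qtop)%type.
Proof.
move=> [U hU] D hD.
pose ab n : rat * rat := odflt (0, 0) (unpickle n).
exists (fun n => Eset X (D n) (ab n).1 (ab n).2).
split.
  by move=> n; split; [exact: Eset_sub | exact: Eset_nwd].
move=> A [[x0 q0] Ap] oA.
have nA : nbhs (x0, q0) A by apply: open_nbhs_nbhs; split.
have [P [Q [hP hQ sub]]] := @prod_nbhsE' X Qtop (x0, q0) A nA.
have [a [b [h1 h2 hL]]] := @Qnbhs q0 Q hQ.
pose n := pickle (a, b).
have abn : ab n = (a, b) by rewrite /ab /n pickleK.
have Jq0 : Jab (ab n).1 (ab n).2 q0 by rewrite abn /Jab /= h1 h2.
have [x [s [Px Es]]] := @Eset_proj X U hU (D n) (ab n).1 (ab n).2 (hD n) q0 Jq0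
  P° (@open_interior _ P) (ex_intro _ x0 hP).
have Js := @Eset_J X (D n) (ab n).1 (ab n).2 (x, s) Es; rewrite abn /Jab /= in Js.
case/andP: Js => as_ sb.
exists (x, s); split; first by apply: sub; [exact: interior_subset Px | exact: hL].
by exists n.
Qed.
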